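(* Let $U\in\mathbb{R}^{n\times d}$, $\mathbf{y}\in\mathbb{R}^n$, $\mathbf{x}_t\in\mathbb{R}^d$, $\lambda_t>0$, and \[ \mathbf{x}_{t+1}=\arg\min_{\mathbf{x}\in\mathbb{R}^d}\frac12\left\|\mathbf{x}-\big(\mathbf{x}_t-U^\top(U\mathbf{x}_t-\mathbf{y})\big)\right\|_2^2+\lambda_t\|\mathbf{x}\|_1 . \] Then for any $s$-sparse vector $\mathbf{x}\in\mathbb{R}^d$, \[ \|\mathbf{x}_{t+1}-\mathbf{x}\|_2^2\le\lambda_t\sqrt s\|\mathbf{x}_{t+1}-\mathbf{x}\|_2+\left|(\mathbf{x}_{t+1}-\mathbf{x})^\top\big(U^\top(U\mathbf{x}_t-\mathbf{y})-(\mathbf{x}_t-\mathbf{x})\big)\right| . \]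
   Context: A vector is $s$-sparse if it has at most $s$ nonzero entries. *)

(* Defs.v *)
From HB Require Import structures.
From mathcomp Require Import all_boot all_order all_algebra.
Set Implicit Arguments. Unset Strict Implicit. Unset Printing Implicit Defensive.
Import Order.TTheory GRing.Theory Num.Theory.
Local Open Scope ring_scope.

Definition norm2 (R : rcfType) (d : nat) (v : 'cV[R]_d) : R :=
  Num.sqrt (\sum_(i < d) v i ord0 ^+ 2).

Definition norm1 (R : rcfType) (d : nat) (v : 'cV[R]_d) : R :=
  \sum_(i < d) `|v i ord0|.

Definition dotv (R : rcfType) (d : nat) (u v : 'cV[R]_d) : R :=
  \sum_(i < d) u i ord0 * v i ord0.

Definition sparse (R : rcfType) (d : nat) (s : nat) (v : 'cV[R]_d) : bool :=
  (#|[set i : 'I_d | v i ord0 != 0%R]| <= s)%N.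

Definition prox_obj (R : rcfType) (d : nat) (z : 'cV[R]_d) (lam : R) (x : 'cV[R]_d) : R :=
  2^-1 * norm2 (x - z) ^+ 2 + lam * norm1 x.

(* Main.v *)
Require Import Defs.
From HB Require Import structures.
From mathcomp Require Import all_boot all_order all_algebra.
From mathcomp Require Import ring lra.
Import Order.TTheory GRing.Theory Num.Theory.
Local Open Scope ring_scope.

Lemma sq_norm2 (R : rcfType) d (v : 'cV[R]_d) : norm2 v ^+ 2 = \sum_i v i ord0 ^+ 2.
Proof. by rewrite /norm2 sqr_sqrtr // sumr_ge0 // => i _; exact: sqr_ge0. Qed.

Lemma key (R : rcfType) d (a b z : 'I_d -> R) (lam : R) : 0 < lam ->
  (forall t, 0 < t <= 1 ->
    2^-1 * (\sum_i (a i - z i) ^+ 2) + lam * \sum_i `|a i|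
    <= 2^-1 * (\sum_i (a i - t * (a i - b i) - z i) ^+ 2)
       + lam * \sum_i `|a i - t * (a i - b i)|) ->
  \sum_i (a i - b i) * (a i - z i) <= lam * (\sum_i `|b i| - \sum_i `|a i|).
Proof.
move=> hl H.
set D := \sum_i (a i - b i) * (a i - z i).
set W := \sum_i (a i - b i) ^+ 2.
set S0 := \sum_i (a i - z i) ^+ 2.
set A : R := \sum_i `|a i|. set B : R := \sum_i `|b i|.
have W0 : 0 <= W by rewrite sumr_ge0 // => i _; exact: sqr_ge0.
have ht : forall t : R, 0 < t <= 1 -> D <= t * W / 2 + lam * (B - A).
  move=> t /andP[t0 t1].
  have E : \sum_i (a i - t * (a i - b i) - z i) ^+ 2 = S0 - t * (2 * D) + t ^+ 2 * W.
    rewrite /S0 /D /W !mulr_sumr -sumrB -big_split /=.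
    by apply: eq_bigr => i _; ring.
  have Ab : \sum_i `|a i - t * (a i - b i)| <= (1 - t) * A + t * B.
    rewrite /A /B !mulr_sumr -big_split /=; apply: ler_sum => i _.
    have -> : a i - t * (a i - b i) = (1 - t) * a i + t * b i by ring.
    apply: le_trans (ler_normD _ _) _.
    by rewrite !normrM (ger0_norm (ltW t0)) ger0_norm ?subr_ge0.
  have := H t (introT andP (conj t0 t1)); rewrite E => H1.
  have H2 : lam * \sum_i `|a i - t * (a i - b i)| <= lam * ((1 - t) * A + t * B).
    by rewrite ler_pM2l.
  have H3 : t * (D - t * W / 2 - lam * (B - A)) <= 0.
    rewrite -/S0 -/A in H1; lra.
  have : D - t * W / 2 - lam * (B - A) <= 0.
    by rewrite -(pmulr_rle0 _ t0).
  lra.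
set c := D - lam * (B - A).
have [c0|c0] := lerP c 0; first by rewrite /c in c0; lra.
have cW : 0 < c + W by lra.
set t := c / (c + W).
have tcw : t * (c + W) = c by rewrite /t mulfVK // gt_eqF.
have t0 : 0 < t by rewrite /t divr_gt0.
have t1 : t <= 1 by rewrite /t ler_pdivrMr // mul1r; lra.
have := ht t (introT andP (conj t0 t1)).
rewrite -/c => h.
have h' : c <= t * W / 2 by rewrite /c; lra.
have : c * (c + W) <= t * W / 2 * (c + W) by rewrite ler_pM2r.
nra.
Qed.

Lemma cs (R : rcfType) d (S : {set 'I_d}) (u : 'I_d -> R) :
  (\sum_(i in S) u i) ^+ 2 <= #|S|%:R * \sum_(i in S) u i ^+ 2.
Proof.
rewrite expr2 mulr_suml.
under eq_bigr do rewrite mulr_sumr.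
apply: (@le_trans _ _ (\sum_(i in S) \sum_(j in S) 2^-1 * (u i ^+ 2 + u j ^+ 2))).
  apply: ler_sum => i _; apply: ler_sum => j _.
  have := sqr_ge0 (u i - u j); lra.
have -> : \sum_(i in S) \sum_(j in S) 2^-1 * (u i ^+ 2 + u j ^+ 2) =
   \sum_(i in S) \sum_(j in S) 2^-1 * u i ^+ 2 + \sum_(i in S) \sum_(j in S) 2^-1 * u j ^+ 2.
  rewrite -big_split; apply: eq_bigr => i _; rewrite -big_split; apply: eq_bigr => j _ /=; ring.
set X := \sum_(i in S) u i ^+ 2. set N : R := #|S|%:R.
have E1 : \sum_(i in S) \sum_(j in S) 2^-1 * u i ^+ 2 = N * (2^-1 * X).
  rewrite /X mulr_sumr mulr_sumr; apply: eq_bigr => i _.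
  by rewrite sumr_const mulr_natl.
have E2 : \sum_(i in S) \sum_(j in S) 2^-1 * u j ^+ 2 = N * (2^-1 * X).
  by rewrite exchange_big /=.
rewrite E1 E2; lra.
Qed.

Lemma sparse_bound (R : rcfType) d (s : nat) (a b : 'I_d -> R) :
  (#|[set i | b i != 0%R]| <= s)%N ->
  \sum_i `|b i| - \sum_i `|a i| <=
    Num.sqrt (s%:R) * Num.sqrt (\sum_i (a i - b i) ^+ 2).
Proof.
move=> hs; set S := [set i | b i != 0%R].
have h1 : \sum_i `|b i| - \sum_i `|a i| <= \sum_(i in S) `|a i - b i|.
  rewrite -sumrB [X in _ <= X]big_mkcond /=; apply: ler_sum => i _.
  rewrite inE; case: eqP => [->|_].
    by rewrite normr0 sub0r oppr_le0 normr_ge0.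
  by rewrite distrC lerB_dist.
apply: le_trans h1 _.
set T := \sum_(i in S) `|a i - b i|.
have T0 : 0 <= T by rewrite sumr_ge0.
have h2 : T ^+ 2 <= #|S|%:R * \sum_i (a i - b i) ^+ 2.
  have hc := @cs R d S (fun i => `|a i - b i|); apply: le_trans hc _.
  apply: ler_wpM2l; first by rewrite ler0n.
  under eq_bigr do rewrite real_normK ?num_real //.
  rewrite [X in _ <= X](bigID (fun i => i \in S)) /= lerDl.
  by rewrite sumr_ge0 //= => i _; exact: sqr_ge0.
have W0 : 0 <= \sum_i (a i - b i) ^+ 2 by rewrite sumr_ge0 // => i _; exact: sqr_ge0.
rewrite -sqrtrM ?ler0n // -(ger0_norm T0) -sqrtr_sqr ler_sqrt ?mulr_ge0 ?ler0n //.
apply: le_trans h2 _; apply: ler_wpM2r => //.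
by rewrite ler_nat.
Qed.

Lemma entries (R : rcfType) d (v : 'cV[R]_d) (f : 'I_d -> R) :
  (forall i, v i ord0 = f i) ->
  [/\ norm2 v ^+ 2 = \sum_i f i ^+ 2, norm2 v = Num.sqrt (\sum_i f i ^+ 2)
    & norm1 v = \sum_i `|f i|].
Proof.
move=> hf; have E : \sum_i v i ord0 ^+ 2 = \sum_i f i ^+ 2.
  by apply: eq_bigr => i _; rewrite hf.
split; first by rewrite sq_norm2.
  by rewrite /norm2 E.
by rewrite /norm1; apply: eq_bigr => i _; rewrite hf.
Qed.

Theorem lemma1 (R : rcfType) (n d s : nat) (U : 'M[R]_(n, d)) (y : 'cV[R]_n)
  (xt xt1 : 'cV[R]_d) (lam : R) (hlam : 0 < lam)
  (hmin : forall x : 'cV[R]_d,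
     prox_obj (xt - U^T *m (U *m xt - y)) lam xt1
       <= prox_obj (xt - U^T *m (U *m xt - y)) lam x)
  (x : 'cV[R]_d) (hx : sparse s x) :
  norm2 (xt1 - x) ^+ 2 <=
    lam * Num.sqrt (s%:R) * norm2 (xt1 - x)
    + `| dotv (xt1 - x) (U^T *m (U *m xt - y) - (xt - x)) |.
Proof.
move: hmin.
set g := U^T *m (U *m xt - y). clearbody g. move=> hmin.
pose a i := xt1 i ord0. pose b i := x i ord0. pose zf i := xt i ord0 - g i ord0.
have K := @key R d a b zf lam hlam.
have K' : \sum_i (a i - b i) * (a i - zf i) <= lam * (\sum_i `|b i| - \sum_i `|a i|).
  apply: K => t ht.
  have := hmin (xt1 - t *: (xt1 - x)); rewrite /prox_obj.
  have [e1 _ e2] := @entries R d (xt1 - (xt - g)) (fun i => a i - zf i)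
     (fun i => ltac:(by rewrite ?mxE)).
  have [e3 _ e4] := @entries R d xt1 a (fun i => ltac:(by rewrite ?mxE)).
  have [e5 _ e6] := @entries R d (xt1 - t *: (xt1 - x) - (xt - g))
     (fun i => a i - t * (a i - b i) - zf i) (fun i => ltac:(by rewrite ?mxE)).
  have [e7 _ e8] := @entries R d (xt1 - t *: (xt1 - x))
     (fun i => a i - t * (a i - b i)) (fun i => ltac:(by rewrite ?mxE)).
  by rewrite e1 e4 e5 e8.
have [e1 e2 _] := @entries R d (xt1 - x) (fun i => a i - b i) (fun i => ltac:(by rewrite ?mxE)).
have hsp := @sparse_bound R d s a b hx.
set D := \sum_i (a i - b i) * (a i - zf i) in K'.
set W := \sum_i (a i - b i) ^+ 2 in e1 e2 hsp.
have dv : dotv (xt1 - x) (g - (xt - x)) = D - W.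
  rewrite /dotv /D /W -sumrB; apply: eq_bigr => i _; rewrite !mxE /a /b /zf; ring.
rewrite dv e1 e2.
set N := Num.sqrt W.
have NW : N ^+ 2 = W by rewrite /N sqr_sqrtr // /W sumr_ge0 // => i _; exact: sqr_ge0.
have h3 : lam * (\sum_i `|b i| - \sum_i `|a i|) <= lam * (Num.sqrt s%:R * N).
  by rewrite ler_pM2l.
have h4 : W - D <= `|D - W| by rewrite distrC; exact: ler_norm.
rewrite -mulrA; lra.
Qed.
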